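(* Let $(X,T),(Y,S)$ be $1$-step shifts of finite type over a finite alphabet $\mathcal{A}$, let $F:\mathcal{A}^2\to\mathbb{R}$ and $f(x,y)=F(x(0),y(0))$, and suppose $(X,T)$ is transitive. Then there is a constant $D_X\in\mathbb{N}$, depending on $(X,T)$ but not on $f$, such that for all integers $a\le b$, all $(v_1,v_2)\in P_{a,b}$ and all $y_0\in Y$, $$\min_{x\in X}\mathbb{S}_{[a,b]}f(x,y_0)\le H_{a,b,v_1,v_2}(y_0)\le\Big[\min_{x\in X}\mathbb{S}_{[a,b]}f(x,y_0)\Big]+4D_X\|f\|,$$ where $\|f\|$ is the supremum norm.
   Context: $\mathcal{A}^{\mathbb{Z}}$ carries the product of discrete topologies and the left shift $(Tx)(j)=x(j+1)$. A shift is a nonempty compact $X\subseteq\mathcal{A}^{\mathbb{Z}}$ with $TX=X$; it is a $1$-step shift of finite type if there is $\mathcal{F}\subseteq\mathcal{A}^{\{0,1\}}$ with $X=\{x:(T^jx)|_{[0,1]}\notin\mathcal{F}\ \forall j\}$. A shift $X$ is transitive if there is $D\in\mathbb{N}$ such that for all $x_1,x_2\in X$ and integers $b_1,a_2$ with $a_2-b_1\ge D$ there is $x'\in X$ with $x'(j)=x_1(j)$ for $j\le b_1$ and $x'(j)=x_2(j)$ for $j\ge a_2$. $\mathbb{S}_{[a,b]}f(x,y)=\sum_{j=a}^bf(T^jx,S^jy)$. $P_{a,b}=\{(v_1,v_2)\in\mathcal{A}^2:\exists x\in X,x(a)=v_1,x(b)=v_2\}$ and $H_{a,b,v_1,v_2}(y)=\min\{\mathbb{S}_{[a,b]}f(x,y):x\in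 X,x(a)=v_1,x(b)=v_2\}$. *)

(* Defs.v *)
From Stdlib Require Import Reals ZArith List.
Open Scope R_scope.

Definition finite_alphabet (A : Type) : Prop :=
  exists l : list A, forall a : A, In a l.

Definition config (A : Type) := Z -> A.

Definition shiftn {A : Type} (j : Z) (x : config A) : config A :=
  fun i => x (i + j)%Z.

(* Closedness in the product of discrete topologies. *)
Definition closed_sub {A : Type} (X : config A -> Prop) : Prop :=
  forall x : config A,
    (forall n : nat, exists z, X z /\
        forall i : Z, (Z.abs i <= Z.of_nat n)%Z -> z i = x i) -> X x.

(* A shift: nonempty, compact (= closed in the compact space A^Z), T X = X. *)
Definition is_shift {A : Type} (X : config A -> Prop) : Prop :=
  (exists x, X x) /\ closed_sub X /\
  (forall x, X x -> X (shiftn 1 x)) /\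
  (forall x, X x -> exists z, X z /\ shiftn 1 z = x).

Definition is_1step_SFT {A : Type} (X : config A -> Prop) : Prop :=
  is_shift X /\
  exists Fb : A -> A -> Prop,
    forall x, X x <-> (forall j : Z, ~ Fb (shiftn j x 0%Z) (shiftn j x 1%Z)).

Definition transitive_shift {A : Type} (X : config A -> Prop) : Prop :=
  exists D : nat, forall (x1 x2 : config A) (b1 a2 : Z),
    X x1 -> X x2 -> (a2 - b1 >= Z.of_nat D)%Z ->
    exists x', X x' /\ (forall j, (j <= b1)%Z -> x' j = x1 j)
                    /\ (forall j, (a2 <= j)%Z -> x' j = x2 j).

Definition Ssum {A : Type} (f : config A -> config A -> R) (a b : Z)
  (x y : config A) : R :=
  sum_f_R0 (fun k => f (shiftn (a + Z.of_nat k)%Z x) (shiftn (a + Z.of_nat k)%Z y))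
           (Z.to_nat (b - a)).

Definition pot {A : Type} (F : A -> A -> R) : config A -> config A -> R :=
  fun x y => F (x 0%Z) (y 0%Z).

Definition Pab {A : Type} (X : config A -> Prop) (a b : Z) (v1 v2 : A) : Prop :=
  exists x, X x /\ x a = v1 /\ x b = v2.

Definition is_min (P : R -> Prop) (m : R) : Prop :=
  P m /\ forall r, P r -> m <= r.

Definition Svals {A : Type} (X : config A -> Prop) (f : config A -> config A -> R)
  (a b : Z) (y0 : config A) : R -> Prop :=
  fun r => exists x, X x /\ r = Ssum f a b x y0.

(* Value set whose minimum is H_{a,b,v1,v2}(y0). *)
Definition Hvals {A : Type} (X : config A -> Prop) (f : config A -> config A -> R)
  (a b : Z) (v1 v2 : A) (y0 : config A) : R -> Prop :=
  fun r => exists x, X x /\ x a = v1 /\ x b = v2 /\ r = Ssum f a b x y0.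

Definition is_supnorm {A : Type} (X Y : config A -> Prop)
  (f : config A -> config A -> R) (nf : R) : Prop :=
  is_lub (fun r => exists x y, X x /\ Y y /\ r = Rabs (f x y)) nf.

(* Main.v *)
Require Import Defs.
From Stdlib Require Import Reals ZArith List Lia Lra Classical.
Open Scope R_scope.

Lemma shift_inv {A : Type} (X : config A -> Prop) x j :
  is_1step_SFT X -> X x -> X (shiftn j x).
Proof.
  intros [_ [Fb HF]] Hx. apply HF. intro j'. pose proof (proj1 (HF x) Hx (j' + j)%Z) as H.
  unfold shiftn in *. replace (0 + j' + j)%Z with (0 + (j' + j))%Z by ring.
  replace (1 + j' + j)%Z with (1 + (j' + j))%Z by ring. exact H.
Qed.

Lemma min_list : forall (L : list R) (P : R -> Prop),
  (exists r, P r) -> (forall r, P r -> In r L) -> exists m, is_min P m.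
Proof.
  induction L as [|c L IH]; intros P [r0 Hr0] HL.
  - destruct (HL r0 Hr0).
  - destruct (classic (exists r, P r /\ r <> c)) as [[r1 Hr1]|Hn].
    + destruct (IH (fun r => P r /\ r <> c)) as [m' [Hm1 Hm2]].
      * exists r1; auto.
      * intros r [Pr Nr]. destruct (HL r Pr); [congruence|auto].
      * destruct (classic (P c)) as [Pc|Pc].
        -- destruct (Rle_dec c m').
           ++ exists c. split; auto. intros r2 Pr. destruct (Req_dec r2 c); [subst; lra|].
              specialize (Hm2 r2 (conj Pr H)). lra.
           ++ exists m'. split; [apply Hm1|]. intros r2 Pr. destruct (Req_dec r2 c); [subst; lra|].
              apply Hm2; auto.
        -- exists m'. split; [apply Hm1|]. intros r Pr. apply Hm2. split; auto.
           intro; subst; auto.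
    + exists c. assert (forall r, P r -> r = c).
      { intros r Pr. apply NNPP. intro. apply Hn. exists r; auto. }
      split.
      * rewrite <- (H r0 Hr0). auto.
      * intros r Pr. rewrite (H r Pr). lra.
Qed.

Lemma list_sums {A : Type} (l : list A) (Hl : forall v, In v l) (g : nat -> A -> R) :
  forall n, exists L, forall c : nat -> A, In (sum_f_R0 (fun k => g k (c k)) n) L.
Proof.
  induction n as [|n [L HL]].
  - exists (map (g 0%nat) l). intro c. simpl. apply in_map. auto.
  - exists (flat_map (fun s => map (fun v => s + g (S n) v) l) L).
    intro c. simpl. apply in_flat_map. exists (sum_f_R0 (fun k => g k (c k)) n).
    split; auto. apply (in_map (fun v => _ + g (S n) v)). auto.
Qed.

Lemma sum_split3 (t i1 i2 : nat -> R) n :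
  sum_f_R0 (fun k => t k + (i1 k + i2 k)) n = sum_f_R0 t n + sum_f_R0 i1 n + sum_f_R0 i2 n.
Proof. induction n; simpl; [lra|]. rewrite IHn. lra. Qed.

Lemma cnt1 c D n : 0 <= c ->
  sum_f_R0 (fun k => if (k <? D)%nat then c else 0) n <= c * INR (Nat.min (S n) D).
Proof.
  intro Hc. induction n.
  - unfold sum_f_R0. destruct (Nat.ltb_spec 0 D).
    + replace (Nat.min 1 D) with 1%nat by lia. simpl. lra.
    + replace (Nat.min 1 D) with 0%nat by lia. simpl. lra.
  - simpl sum_f_R0. destruct (Nat.ltb_spec (S n) D).
    + replace (Nat.min (S (S n)) D) with (S (S n)) by lia.
      replace (Nat.min (S n) D) with (S n) in IHn by lia.
      rewrite (S_INR (S n)), Rmult_plus_distr_l. lra.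
    + replace (Nat.min (S (S n)) D) with D by lia.
      assert (INR (Nat.min (S n) D) <= INR D) by (apply le_INR; lia).
      assert (c * INR (Nat.min (S n) D) <= c * INR D) by (apply Rmult_le_compat_l; auto).
      lra.
Qed.

Lemma cnt2 c D m n : 0 <= c -> (n <= m)%nat ->
  sum_f_R0 (fun k => if (m <? k + D)%nat then c else 0) n <= c * INR ((n + D) - m).
Proof.
  intros Hc. induction n; intro Hn.
  - unfold sum_f_R0. cbv beta. replace (0 + D)%nat with D by lia. destruct (Nat.ltb_spec m D).
    + assert (1 <= INR (D - m)) by (replace 1 with (INR 1) by reflexivity; apply le_INR; lia).
      nra.
    + apply Rmult_le_pos; auto. apply pos_INR.
  - simpl sum_f_R0. specialize (IHn ltac:(lia)). change (S n + D)%nat with (S (n + D)). destruct (Nat.ltb_spec m (S (n + D))).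
    + replace (S (n + D) - m)%nat with (S (n + D - m)) by lia. rewrite S_INR, Rmult_plus_distr_l. lra.
    + assert (INR (n + D - m) <= INR (S (n + D) - m)) by (apply le_INR; lia).
      assert (c * INR (n + D - m) <= c * INR (S (n + D) - m)) by (apply Rmult_le_compat_l; auto).
      lra.
Qed.

Lemma Ssum_eq {A : Type} (F : A -> A -> R) a b x y :
  Ssum (pot F) a b x y =
  sum_f_R0 (fun k => F (x (a + Z.of_nat k)%Z) (y (a + Z.of_nat k)%Z)) (Z.to_nat (b - a)).
Proof. reflexivity. Qed.

Lemma core (A:Type) (X Y : config A -> Prop) F a b x x' y0 nf D :
  is_1step_SFT X -> is_1step_SFT Y -> X x -> X x' -> Y y0 -> is_supnorm X Y (pot F) nf ->
  (forall k, (k <= Z.to_nat (b-a))%nat -> x' (a + Z.of_nat k)%Z = x (a + Z.of_nat k)%Z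
        \/ (k < D)%nat \/ (Z.to_nat (b-a) < k + D)%nat) ->
  Ssum (pot F) a b x' y0 <= Ssum (pot F) a b x y0 + 4 * INR D * nf.
Proof.
  intros HX HY Hx Hx' Hy Hs Hk. rewrite !Ssum_eq. set (n := Z.to_nat (b - a)) in *.
  assert (Hnf : 0 <= nf).
  { destruct Hs as [Hub _]. apply Rle_trans with (Rabs (pot F x y0)); [apply Rabs_pos|].
    apply Hub. exists x, y0; auto. }
  assert (Hb : forall z j, X z -> Rabs (F (z j) (y0 j)) <= nf).
  { intros z j Hz. destruct Hs as [Hub _]. apply Hub. exists (shiftn j z), (shiftn j y0).
    split; [apply shift_inv; auto|]. split; [apply shift_inv; auto|]. reflexivity. }
  apply Rle_trans with
    (sum_f_R0 (fun k => F (x (a + Z.of_nat k)%Z) (y0 (a + Z.of_nat k)%Z)) n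
     + sum_f_R0 (fun k => if (k <? D)%nat then 2 * nf else 0) n
     + sum_f_R0 (fun k => if (n <? k + D)%nat then 2 * nf else 0) n).
  - rewrite <- sum_split3. apply sum_Rle. intros k Hkn. cbv beta.
    set (j := (a + Z.of_nat k)%Z).
    pose proof (Hb x' j Hx') as B1. pose proof (Hb x j Hx) as B2.
    pose proof (Rle_abs (F (x' j) (y0 j))).
    pose proof (Rle_abs (- F (x j) (y0 j))) as B3. rewrite Rabs_Ropp in B3.
    destruct (Hk k Hkn) as [E|[E|E]].
    + unfold j; rewrite E. destruct (k <? D)%nat, (n <? k + D)%nat; lra.
    + rewrite (proj2 (Nat.ltb_lt _ _) E). destruct (n <? k + D)%nat; lra.
    + rewrite (proj2 (Nat.ltb_lt _ _) E). destruct (k <? D)%nat; lra.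
  - pose proof (cnt1 (2 * nf) D n ltac:(lra)).
    pose proof (cnt2 (2 * nf) D n n ltac:(lra) (le_n n)).
    replace (n + D - n)%nat with D in H0 by lia.
    assert (INR (Nat.min (S n) D) <= INR D) by (apply le_INR; lia).
    assert (2 * nf * INR (Nat.min (S n) D) <= 2 * nf * INR D) by (apply Rmult_le_compat_l; lra).
    lra.
Qed.

Theorem lemma3p8 (A : Type) (X Y : config A -> Prop) :
  finite_alphabet A -> is_1step_SFT X -> is_1step_SFT Y -> transitive_shift X ->
  exists DX : nat,
    forall (F : A -> A -> R) (a b : Z) (v1 v2 : A) (y0 : config A),
      (a <= b)%Z -> Pab X a b v1 v2 -> Y y0 ->
      exists m h nf : R,
        is_min (Svals X (pot F) a b y0) m /\
        is_min (Hvals X (pot F) a b v1 v2 y0) h /\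
        is_supnorm X Y (pot F) nf /\
        m <= h <= m + 4 * INR DX * nf.
Proof.
  intros [l Hl] HX HY [D HD]. exists D.
  intros F a b v1 v2 y0 Hab [w [Hw [Hwa Hwb]]] Hy0.
  set (Pn := fun r => exists x y, X x /\ Y y /\ r = Rabs (pot F x y)).
  set (Ln := flat_map (fun u => map (fun v => Rabs (F u v)) l) l).
  destruct (min_list (map Ropp Ln) (fun r => Pn (- r))) as [mq [Hmq1 Hmq2]].
  { exists (- Rabs (pot F w y0)). rewrite Ropp_involutive. exists w, y0; auto. }
  { intros r [x [y [Hx [Hy E]]]]. rewrite <- (Ropp_involutive r). apply in_map.
    rewrite E. unfold Ln. apply in_flat_map. exists (x 0%Z). split; auto.
    apply (in_map (fun v => Rabs (F (x 0%Z) v))). auto. }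
  assert (Hsup : is_supnorm X Y (pot F) (- mq)).
  { split.
    - intros r Pr. assert (Pn (- - r)) by (rewrite Ropp_involutive; exact Pr).
      specialize (Hmq2 _ H). lra.
    - intros u Hu. apply Hu. exact Hmq1. }
  destruct (list_sums l Hl (fun k v => F v (y0 (a + Z.of_nat k)%Z)) (Z.to_nat (b - a)))
    as [L HL].
  destruct (min_list L (Svals X (pot F) a b y0)) as [m [[xm [Hxm Em]] Hm2]].
  { exists (Ssum (pot F) a b w y0). exists w; auto. }
  { intros r [x [_ E]]. rewrite E, Ssum_eq. apply (HL (fun k => x (a + Z.of_nat k)%Z)). }
  destruct (min_list L (Hvals X (pot F) a b v1 v2 y0)) as [h [Hh1 Hh2]].
  { exists (Ssum (pot F) a b w y0). exists w; auto. }
  { intros r [x [_ [_ [_ E]]]]. rewrite E, Ssum_eq. apply (HL (fun k => x (a + Z.of_nat k)%Z)). }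
  exists m, h, (- mq). split; [split; [exists xm; auto | exact Hm2]|].
  split; [split; auto|]. split; [exact Hsup|]. split.
  { destruct Hh1 as [x [Hx [_ [_ E]]]]. apply Hm2. exists x; auto. }
  assert (Hex : exists x', X x' /\ x' a = v1 /\ x' b = v2 /\
    forall k, (k <= Z.to_nat (b-a))%nat -> x' (a + Z.of_nat k)%Z = xm (a + Z.of_nat k)%Z
        \/ (k < D)%nat \/ (Z.to_nat (b-a) < k + D)%nat).
  { destruct (Z_lt_le_dec (b - a) (Z.of_nat D)) as [Hlt|Hge].
    - exists w. repeat split; auto. intros k Hk. right; left. lia.
    - destruct (HD w xm a (a + Z.of_nat D)%Z Hw Hxm ltac:(lia)) as [x1 [Hx1 [E1 E2]]].
      destruct (HD x1 w (b - Z.of_nat D)%Z b Hx1 Hw ltac:(lia)) as [x2 [Hx2 [G1 G2]]].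
      exists x2. split; auto. split.
      + rewrite G1 by lia. rewrite E1 by lia. auto.
      + split; [rewrite G2 by lia; auto|].
        intros k Hk. destruct (Nat.lt_ge_cases k D); [right; left; auto|].
        destruct (Nat.lt_ge_cases (Z.to_nat (b - a)) (k + D)); [right; right; auto|].
        left. rewrite G1 by lia. rewrite E2 by lia. auto. }
  destruct Hex as [x' [Hx' [E1 [E2 Hk]]]].
  apply Rle_trans with (Ssum (pot F) a b x' y0).
  - apply Hh2. exists x'; auto.
  - rewrite Em. apply (core A X Y); auto.
Qed.
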